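(* For $n\ge1$ let $a_n$ be the number of equivalence classes of period configurations of Parallel Diffusion on the unlabelled complete graph $K_n$. Then $a_1=1$, $a_2=2$, $a_3=6$, $a_4=19$, and $a_n=5a_{n-1}-7a_{n-2}+4a_{n-3}$ for all $n\ge5$.
   Context: Parallel Diffusion on a graph $G$: a configuration assigns an integer stack size $|v|$ to each vertex. One firing step replaces every stack size simultaneously by $|v| + \#\{u\in N(v): |u|>|v|\} - \#\{u\in N(v): |u|<|v|\}$. A period configuration is a configuration $D$ such that repeated firing starting from $D$ returns to $D$ after some positive number of steps. On the complete graph $K_n$ with unlabelled vertices, a configuration is a multiset of $n$ integers. Two configurations are equivalent if one is obtained from the other by adding the same integer to every stack size. *)

(* Defs.v *)
From mathcomp Require Import all_boot all_order all_algebra.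
Set Implicit Arguments. Unset Strict Implicit. Unset Printing Implicit Defensive.
Import Order.TTheory GRing.Theory Num.Theory.
Local Open Scope ring_scope.

(* A configuration on the unlabelled complete graph K_n is a multiset of n
   integers, represented by a sequence [s : seq int] of size n taken up to
   permutation ([perm_eq]).  Each entry is the stack size of one vertex. *)

(* One firing step of Parallel Diffusion on K_n: every vertex v gains one
   for each other vertex with a strictly larger stack, and loses one for each
   other vertex with a strictly smaller stack.  (Counting over all of s is the
   same as counting over N(v) = the other vertices, since v itself is neither
   strictly larger nor strictly smaller than itself.) *)
Definition pd_fire (s : seq int) : seq int :=
  [seq x + (count (fun y => x < y) s)%:R - (count (fun y => y < x) s)%:R
  | x <- s].

Definition pd_period (s : seq int) : Prop :=
  exists k : nat, (0 < k)%N /\ perm_eq (iter k pd_fire s) s.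

Definition pd_equiv (s t : seq int) : Prop :=
  exists c : int, perm_eq t [seq x + c | x <- s].

Definition pd_num_classes (n k : nat) : Prop :=
  exists reps : seq (seq int),
    [/\ size reps = k,
        (forall r, r \in reps -> size r = n /\ pd_period r),
        (forall i j, (i < k)%N -> (j < k)%N -> i <> j ->
           ~ pd_equiv (nth [::] reps i) (nth [::] reps j)) &
        (forall s : seq int, size s = n -> pd_period s ->
           exists2 r, r \in reps & pd_equiv s r)].

(* Main.v *)
Require Import Defs.
From mathcomp Require Import all_boot all_order all_algebra.
From mathcomp Require Import zify ring lra.
Import Order.TTheory GRing.Theory Num.Theory.
Set Implicit Arguments. Unset Strict Implicit.
Local Open Scope ring_scope.


Definition G (s : seq int) (x : int) : int :=
  x + (count (fun y => x < y) s)%:R - (count (fun y => y < x) s)%:R.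

Lemma fireE s : pd_fire s = map (G s) s.
Proof. by []. Qed.

Definition Rp (s : seq int) : Prop :=
  forall x y, x \in s -> y \in s -> x < y -> G s y < G s x.

Lemma firefire s : Rp s -> pd_fire (pd_fire s) = s.
Proof.
move=> R; rewrite !fireE -map_comp.
transitivity (map id s); last by rewrite map_id.
apply/eq_in_map => x xs /=.
rewrite /G !count_map.
have -> : count (preim (G s) (fun y => G s x < y)) s = count (fun y => y < x) s.
  apply: eq_in_count => z zs /=; case: (ltgtP z x) => h.
  - by rewrite (R _ _ zs xs h).
  - by apply/negbTE; rewrite -leNgt; apply/ltW; apply: R.
  - by rewrite h ltxx.
have -> : count (preim (G s) (fun y => y < G s x)) s = count (fun y => x < y) s.
  apply: eq_in_count => z zs /=; case: (ltgtP z x) => h.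
  - by apply/negbTE; rewrite -leNgt; apply/ltW; apply: R.
  - by rewrite (R _ _ xs zs h).
  - by rewrite h ltxx.
rewrite /G; ring.
Qed.

Lemma Rp_period s : Rp s -> pd_period s.
Proof. by move=> R; exists 2%N; split => //=; rewrite firefire. Qed.


Definition Dv (s : seq int) (x : int) : int := \sum_(y <- s) Num.sg (y - x).

Lemma cnt_sg (t : seq int) x :
  (count (fun y => x < y) t)%:R - (count (fun y => y < x) t)%:R = Dv t x :> int.
Proof.
rewrite /Dv; elim: t => [|z t IH]; first by rewrite big_nil.
rewrite big_cons /= -IH !natrD.
case: (ltgtP z x) => h.
- rewrite (@ltr0_sg _ (z - x)); last by rewrite subr_lt0.
  simpl; ring.
- rewrite (@gtr0_sg _ (z - x)); last by rewrite subr_gt0.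
  simpl; ring.
- rewrite h subrr sgr0 /=; ring.
Qed.

Lemma G_D s x : G s x = x + Dv s x.
Proof. by rewrite /G -cnt_sg addrA. Qed.

Lemma sg_swap (a b : int) : Num.sg (a - b) = - Num.sg (b - a).
Proof. by rewrite -sgrN opprB. Qed.

Lemma dsum_anti (s : seq int) (h : int -> int) :
  \sum_(x <- s) \sum_(y <- s) (h x - h y) * Num.sg (y - x)
  = 2 * \sum_(x <- s) h x * Dv s x.
Proof.
have E1 : \sum_(x <- s) \sum_(y <- s) h x * Num.sg (y - x) = \sum_(x <- s) h x * Dv s x.
  by apply: eq_bigr => x _; rewrite /Dv mulr_sumr.
have E2 : \sum_(x <- s) \sum_(y <- s) h y * Num.sg (y - x) = - \sum_(x <- s) h x * Dv s x.
  rewrite exchange_big -E1 -sumrN; apply: eq_bigr => x _; rewrite -sumrN.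
  by apply: eq_bigr => y _; rewrite sg_swap mulrN.
have -> : \sum_(x <- s) \sum_(y <- s) (h x - h y) * Num.sg (y - x) =
  \sum_(x <- s) \sum_(y <- s) h x * Num.sg (y - x) -
  \sum_(x <- s) \sum_(y <- s) h y * Num.sg (y - x).
  rewrite -sumrB; apply: eq_bigr => x _; rewrite -sumrB.
  by apply: eq_bigr => y _; rewrite mulrBl.
rewrite E1 E2; ring.
Qed.

Lemma absg (a b : int) : (a - b) * Num.sg (b - a) = - `|a - b|.
Proof.
case: (ltgtP a b) => h.
- rewrite gtr0_sg ?subr_gt0 // ltr0_norm ?subr_lt0 //; ring.
- rewrite ltr0_sg ?subr_lt0 // gtr0_norm ?subr_gt0 //; ring.
- by rewrite h subrr normr0 mul0r oppr0.
Qed.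

Definition Phi (s : seq int) : int :=
  2 * \sum_(x <- s) x ^+ 2 - \sum_(x <- s) \sum_(y <- s) `|x - y|.

Definition Del (s : seq int) (x y : int) : int :=
  `|G s x - G s y| - (G s x - G s y) * Num.sg (y - x).

Lemma Del_ge0 s x y : 0 <= Del s x y.
Proof.
rewrite /Del subr_ge0; set a := G s x - G s y.
case: (ltgtP y x) => h.
- rewrite ltr0_sg ?subr_lt0 // mulrN1; rewrite -normrN; exact: ler_norm.
- rewrite gtr0_sg ?subr_gt0 // mulr1; exact: ler_norm.
- by rewrite h subrr sgr0 mulr0.
Qed.

Lemma Phi_fire s :
  Phi (pd_fire s) = Phi s - \sum_(x <- s) \sum_(y <- s) Del s x y.
Proof.
rewrite fireE /Phi !big_map.
under [X in _ - X = _]eq_bigr do rewrite big_map.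
have E : \sum_(x <- s) \sum_(y <- s) `|x - y| = - (2 * \sum_(x <- s) x * Dv s x).
  rewrite -(dsum_anti s id) -sumrN; apply: eq_bigr => x _; rewrite -sumrN.
  by apply: eq_bigr => y _; rewrite absg opprK.
have E' : \sum_(i <- s) \sum_(j <- s) `|G s i - G s j| =
   \sum_(x <- s) \sum_(y <- s) Del s x y + 2 * \sum_(x <- s) G s x * Dv s x.
  rewrite -(dsum_anti s (G s)) -big_split; apply: eq_bigr => x _ /=.
  rewrite -big_split; apply: eq_bigr => y _ /=; rewrite /Del; ring.
have Q1 : \sum_(x <- s) G s x ^+ 2 = \sum_(x <- s) x ^+ 2 +
   2 * \sum_(x <- s) x * Dv s x + \sum_(x <- s) Dv s x ^+ 2.
  rewrite mulr_sumr -!big_split; apply: eq_bigr => x _ /=; rewrite G_D; ring.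
have Q2 : \sum_(x <- s) G s x * Dv s x =
   \sum_(x <- s) x * Dv s x + \sum_(x <- s) Dv s x ^+ 2.
  rewrite -big_split; apply: eq_bigr => x _ /=; rewrite G_D; ring.
rewrite E' Q1 Q2 E; ring.
Qed.

Lemma psum_pos (T : eqType) (s : seq T) (F : T -> int) x :
  (forall y, y \in s -> 0 <= F y) -> x \in s -> 0 < F x -> 0 < \sum_(y <- s) F y.
Proof.
move=> H xs Fx.
rewrite (perm_big _ (perm_to_rem xs)) big_cons.
apply: (lt_le_trans Fx); rewrite lerDl big_seq; apply: sumr_ge0 => y ys.
apply: H; exact: mem_rem ys.
Qed.

Lemma Phi_le s : Phi (pd_fire s) <= Phi s.
Proof.
rewrite Phi_fire lerBlDr lerDl; apply: sumr_ge0 => x _; apply: sumr_ge0 => y _.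
exact: Del_ge0.
Qed.

Lemma Phi_lt s x y : x \in s -> y \in s -> x < y -> G s x < G s y ->
  Phi (pd_fire s) < Phi s.
Proof.
move=> xs ys xy Gxy.
rewrite Phi_fire ltrBlDr ltrDl.
apply: (@psum_pos _ _ _ x) => //.
  by move=> z _; apply: sumr_ge0 => w _; exact: Del_ge0.
apply: (@psum_pos _ _ _ y) => //; first by move=> *; exact: Del_ge0.
rewrite /Del gtr0_sg ?subr_gt0 // mulr1 ltr0_norm ?subr_lt0 //.
lia.
Qed.

Lemma Phi_perm s t : perm_eq s t -> Phi s = Phi t.
Proof.
move=> pst; rewrite /Phi (perm_big _ pst) [in LHS](perm_big _ pst).
congr (_ - _); apply: eq_bigr => x _; exact: perm_big.
Qed.

Lemma undup_map_le (f : int -> int) s : (size (undup (map f s)) <= size (undup s))%N.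
Proof.
elim: s => [|z s IH] //=.
case: ifP => fz; case: ifP => zs //=; first by apply: (leq_trans IH).
by rewrite (map_f f zs) in fz.
Qed.

Lemma undup_map_lt (f : int -> int) s x y : x \in s -> y \in s -> x != y ->
  f x = f y -> (size (undup (map f s)) < size (undup s))%N.
Proof.
elim: s => [|z s IH] //= xs ys xy fxy.
move: xs ys; rewrite !in_cons.
case: ifP => fz; case: ifP => zs /=.
- move=> xs ys; apply: IH => //.
  + by case/orP: xs => [/eqP ->|].
  + by case/orP: ys => [/eqP ->|].
- by move=> _ _; rewrite ltnS; apply: undup_map_le.
- by rewrite (map_f f zs) in fz.
- case/orP => [/eqP ex|xs]; case/orP => [/eqP ey|ys].
  + by rewrite ex ey eqxx in xy.
  + by rewrite -ex fxy (map_f f ys) in fz.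
  + by rewrite -ey -fxy (map_f f xs) in fz.
  + by rewrite ltnS; apply: IH.
Qed.

Definition Dn (s : seq int) := size (undup s).

Lemma Dn_perm s t : perm_eq s t -> Dn s = Dn t.
Proof. by move=> pst; apply: perm_size; apply: perm_undup; apply: perm_mem. Qed.

Lemma iter_Phi k s : Phi (iter k pd_fire s) <= Phi s.
Proof.
elim: k => [|k IH] //=; exact: (le_trans (Phi_le _) IH).
Qed.

Lemma iter_Dn k s : (Dn (iter k pd_fire s) <= Dn s)%N.
Proof.
elim: k => [|k IH] //=; apply: (leq_trans _ IH); rewrite fireE; exact: undup_map_le.
Qed.

Lemma period_Rp s : pd_period s -> Rp s.
Proof.
case=> [[|k] [// _ pk]].
rewrite iterSr in pk.
have hP : Phi s <= Phi (pd_fire s).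
  by rewrite -(Phi_perm pk); apply: iter_Phi.
have hD : (Dn s <= Dn (pd_fire s))%N.
  by rewrite -(Dn_perm pk); apply: iter_Dn.
move=> x y xs ys xy.
case: (ltgtP (G s y) (G s x)) => // h.
- have := Phi_lt xs ys xy h; by rewrite ltNge hP.
- have : (Dn (pd_fire s) < Dn s)%N.
    rewrite fireE; apply: (undup_map_lt xs ys) => //; by rewrite lt_eqF.
  by rewrite ltnNge hD.
Qed.


Definition c0 (t : seq int) : nat := count_mem 0 t.
Definition shiftg (m g : nat) (t : seq int) : seq int :=
  nseq m 0 ++ map (fun x => x + g%:Z) t.

Definition Bg (rec : nat -> seq (seq int)) (n m : nat) : seq (seq int) :=
  (if m == n then [:: nseq n 0] else [::]) ++
  [seq shiftg m g t | t <- rec (n - m)%N, g <- iota 1 (m + c0 t).-1].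

Fixpoint Rg (f n : nat) : seq (seq int) :=
  match f with
  | 0 => [::]
  | f'.+1 => [seq x | m <- iota 1 n, x <- Bg (Rg f') n m]
  end.

Definition canon (t : seq int) := sorted <=%R t && (head 1 t == 0).

Lemma canon_ge0 t : canon t -> all (fun x => 0 <= x) t.
Proof.
case/andP; case: t => [|x t] //= st /eqP ex; subst x; rewrite lexx /=.
by move: st; rewrite (path_sortedE le_trans) => /andP [].
Qed.

Lemma canon_mem0 t : canon t -> 0 \in t.
Proof. by case/andP; case: t => [|x t] // _ /= /eqP ->; rewrite mem_head. Qed.

Lemma G_shift (m g : nat) t z : all (fun x => 0 <= x) t -> (0 < g)%N -> z \in t ->
  G (shiftg m g t) (z + g%:Z) = G t z + g%:Z - m%:Z.
Proof.
move=> t0 g0 zt.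
have z0 : 0 <= z by exact: (allP t0).
rewrite /G /shiftg !count_cat !count_nseq !count_map /=.
have -> : (z + g%:Z < 0) = false.
  apply/negbTE; rewrite -leNgt; apply: addr_ge0 => //.
have -> : (0 < z + g%:Z) = true.
  apply: ltr_wpDl => //; by rewrite ltz_nat.
have -> : count (preim (fun x => x + g%:Z) (fun y => z + g%:Z < y)) t = count (fun y => z < y) t.
  by apply: eq_count => y /=; rewrite ltrD2r.
have -> : count (preim (fun x => x + g%:Z) (fun y => y < z + g%:Z)) t = count (fun y => y < z) t.
  by apply: eq_count => y /=; rewrite ltrD2r.
rewrite !mul0n mul1n add0n natrD; ring.
Qed.

Lemma G_shift0 (m g : nat) t : all (fun x => 0 <= x) t -> (0 < g)%N ->
  G (shiftg m g t) 0 = (size t)%:Z.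
Proof.
move=> t0 g0.
rewrite /G /shiftg !count_cat !count_nseq !count_map /= !mul0n !add0n.
have -> : count (preim (fun x => x + g%:Z) (fun y => 0 < y)) t = size t.
  apply/eqP; rewrite -all_count; apply/allP => y yt /=.
  apply: ltr_wpDl; [exact: (allP t0) | by rewrite ltz_nat].
have -> : count (preim (fun x => x + g%:Z) (fun y => y < 0)) t = 0%N.
  apply/eqP; rewrite -leqn0 leqNgt -has_count; apply/hasPn => y yt /=.
  rewrite -leNgt; apply: addr_ge0; [exact: (allP t0) | by []].
by rewrite add0r subr0 natz.
Qed.

Lemma G_0 t : canon t -> G t 0 = (size t)%:Z - (c0 t)%:Z.
Proof.
move=> ct; have t0 := canon_ge0 ct.
rewrite /G add0r.
have -> : count (fun y => y < 0) t = 0%N.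
  apply/eqP; rewrite -leqn0 leqNgt -has_count; apply/hasPn => y yt /=.
  by rewrite -leNgt; exact: (allP t0).
have E : (count (fun y : int => (0 < y)%R) t + c0 t)%N = size t.
  rewrite /c0 -(count_predC (fun y : int => (0 < y)%R) t); congr (_ + _)%N.
  apply: eq_in_count => y yt /=; have := (allP t0) _ yt.
  by move=> y0; rewrite lt_def y0 andbT negbK eq_sym.
by rewrite -E subr0 PoszD natz addrK.
Qed.

Lemma sorted_nseq0 m (L : seq int) : sorted <=%R L -> all (fun x => 0 <= x) L ->
  sorted <=%R (nseq m 0 ++ L).
Proof.
move=> sL aL; elim: m => [//|m IH] /=.
rewrite (path_sortedE le_trans) IH andbT all_cat aL andbT.
by apply/allP => x /nseqP [-> _].
Qed.

Lemma shift_size m g t : size (shiftg m g t) = (m + size t)%N.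
Proof. by rewrite /shiftg size_cat size_nseq size_map. Qed.

Lemma shift_canon m g t : (0 < m)%N -> canon t -> canon (shiftg m g t).
Proof.
move=> m0 ct; have t0 := canon_ge0 ct.
apply/andP; split; last by case: m m0.
apply: sorted_nseq0.
  rewrite sorted_map; apply: sub_sorted (proj1 (andP ct)) => x y /=.
  by rewrite lerD2r.
apply/allP => x /mapP [z zt ->]; apply: addr_ge0 => //; exact: (allP t0).
Qed.

Lemma shift_c0 m g t : (0 < g)%N -> canon t -> c0 (shiftg m g t) = m.
Proof.
move=> g0 ct; have t0 := canon_ge0 ct.
rewrite /c0 /shiftg count_cat count_nseq /= mul1n.
have -> : count_mem (0:int) (map (fun x => x + g%:Z) t) = 0%N.
  apply/eqP; rewrite -leqn0 leqNgt -has_count; apply/hasPn => y /mapP [z zt ->] /=.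
  apply/negP => /eqP h.
  have : 0 < z + g%:Z by apply: ltr_wpDl; [exact: (allP t0) | by rewrite ltz_nat].
  by rewrite h ltxx.
by rewrite addn0.
Qed.

Lemma shift_Rp m g t : (0 < m)%N -> (0 < g)%N -> (g < m + c0 t)%N ->
  canon t -> Rp t -> Rp (shiftg m g t).
Proof.
move=> m0 g0 gl ct Rt; have t0 := canon_ge0 ct.
have Gz0 z : z \in t -> G t z <= G t 0.
  move=> zt; have z0 : 0 <= z := allP t0 _ zt.
  move: z0; rewrite le_eqVlt => /orP [/eqP <- //| zp].
  by apply/ltW; apply: Rt => //; exact: canon_mem0.
have G0 := G_0 ct.
move=> x y; rewrite /shiftg !mem_cat !mem_nseq m0 /=.
case/orP => [/eqP -> | /mapP [z1 z1t ->]]; case/orP => [/eqP -> | /mapP [z2 z2t ->]].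
- by rewrite ltxx.
- move=> _; rewrite G_shift // G_shift0 //.
  have := Gz0 _ z2t; rewrite G0; move: (G t z2) => a h.
  have gl' : (g%:Z < m%:Z + (c0 t)%:Z) by rewrite -PoszD ltz_nat.
  set st := @size int t in h *. lia.
- move=> h; exfalso.
  have : 0 < z1 + g%:Z by apply: ltr_wpDl; [exact: (allP t0) | by rewrite ltz_nat].
  by rewrite ltNge (ltW h).
- rewrite ltrD2r => h; rewrite !G_shift //.
  have := Rt _ _ z1t z2t h; lia.
Qed.

Lemma Rg_0 f : Rg f 0 = [::].
Proof. by case: f. Qed.

Lemma Rg_S f n : Rg f.+1 n = [seq x | m <- iota 1 n, x <- Bg (Rg f) n m].
Proof. by []. Qed.

Lemma Rg_fuel f1 f2 n : (n <= f1)%N -> (n <= f2)%N -> Rg f1 n = Rg f2 n.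
Proof.
elim: f1 f2 n => [|f1 IH] f2 n h1 h2.
  have -> : n = 0%N by lia.
  by rewrite !Rg_0.
case: n h1 h2 => [|n] h1 h2; first by rewrite !Rg_0.
case: f2 h2 => [//|f2] h2; rewrite !Rg_S.
congr flatten; apply/eq_in_map => m; rewrite mem_iota => /andP [m1 _].
rewrite /Bg (IH f2) //; lia.
Qed.

Lemma nseq0_canon n : (0 < n)%N -> canon (nseq n (0:int)).
Proof.
move=> n0; apply/andP; split; last by case: n n0.
by have := @sorted_nseq0 n [::] isT isT; rewrite cats0.
Qed.

Lemma nseq0_Rp n : Rp (nseq n (0:int)).
Proof. by move=> x y /nseqP [-> _] /nseqP [-> _]; rewrite ltxx. Qed.

Lemma Rg_sound f n t : t \in Rg f n -> [/\ size t = n, canon t & Rp t].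
Proof.
elim: f n t => [//|f IH] n t /= /allpairsPdep [m [x [mi xB ->]]].
move: mi; rewrite mem_iota => /andP [m1 mn].
move: xB; rewrite /Bg mem_cat => /orP [].
  case: eqP => // mE; rewrite inE => /eqP ->.
  split; [exact: size_nseq | apply: nseq0_canon; lia | exact: nseq0_Rp].
case/allpairsPdep => t' [g [t'R gi ->]].
have [st' ct' Rt'] := IH _ _ t'R.
move: gi; rewrite mem_iota => /andP [g1 gl].
split.
- rewrite shift_size st'; lia.
- apply: shift_canon => //.
- apply: shift_Rp => //; lia.
Qed.

Lemma Bg_c0 f n m x : (0 < m)%N -> x \in Bg (Rg f) n m -> c0 x = m.
Proof.
move=> m0; rewrite /Bg mem_cat => /orP [].
  case: eqP => // mE; rewrite inE => /eqP ->.
  by rewrite /c0 count_nseq /= mul1n.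
case/allpairsPdep => t' [g [t'R gi ->]].
have [_ ct' _] := Rg_sound t'R.
move: gi; rewrite mem_iota => /andP [g1 _].
exact: shift_c0.
Qed.

Lemma decomp (t : seq int) : sorted <=%R t -> all (fun x => 0 <= x) t ->
  t = nseq (c0 t) 0 ++ filter (fun x => 0 < x) t.
Proof.
elim: t => [//|x t IH] st /andP [x0 a0].
have st' : sorted <=%R t := path_sorted st.
rewrite /c0 /=; case: (ltgtP x 0) => h.
- by move: x0; rewrite leNgt h.
- have ax : all (fun y => 0 < y) t.
    apply/allP => y yt; apply: (lt_le_trans h).
    by move: st => /=; rewrite (path_sortedE le_trans) => /andP [/allP /(_ _ yt)].
  have -> : count_mem 0 t = 0%N.
    apply/eqP; rewrite -leqn0 leqNgt -has_count; apply/hasPn => y yt /=.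
    by apply/negP => /eqP e; move: (allP ax _ yt); rewrite e ltxx.
  by move/all_filterP: ax => ->.
- rewrite h /=; congr (_ :: _); exact: IH.
Qed.

Lemma Rg_complete f n t : (n <= f)%N -> size t = n -> (0 < n)%N -> canon t -> Rp t ->
  t \in Rg f n.
Proof.
elim: f n t => [|f IH] n t nf st n0 ct Rt; first by lia.
have t0 := canon_ge0 ct.
have m1 : (0 < c0 t)%N by rewrite /c0 -has_count has_pred1 canon_mem0.
have mn : (c0 t <= n)%N by rewrite -st count_size.
rewrite Rg_S; apply/allpairsPdep; exists (c0 t), t; split => //.
  by rewrite mem_iota; lia.
rewrite /Bg mem_cat; case: eqP => [mE|mE].
  rewrite inE; apply/orP; left; apply/eqP.
  rewrite -st; apply/all_pred1P; rewrite all_count -/(c0 t) mE st.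
  by [].
apply/orP; right.
set m := c0 t in m1 mn mE *.
set rest := filter (fun x => 0 < x) t.
have dec : t = nseq m 0 ++ rest by apply: decomp => //; case/andP: ct.
have srest : size rest = (n - m)%N.
  by move: (congr1 size dec); rewrite size_cat size_nseq st => ->; rewrite addKn.
have restp : all (fun x => 0 < x) rest by apply: filter_all.
have sorted_rest : sorted <=%R rest.
  by apply: sorted_filter; [exact: le_trans | case/andP: ct].
case Er : rest => [|g0 rest'] in srest restp sorted_rest.
  by move: srest => /= srest; lia.
have g0p : 0 < g0 by case/andP: restp.
set gn := `|g0|%N.
have g0E : g0 = gn%:Z by rewrite /gn gtz0_abs.
set t' := map (fun x => x - g0) (g0 :: rest').
have restE : g0 :: rest' = map (fun x => x + gn%:Z) t'.
  rewrite /t' -map_comp -[LHS]map_id; apply: eq_map => x /=; by rewrite -g0E subrK.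
have Et : t = shiftg m gn t' by rewrite /shiftg -restE -Er.
have ct' : canon t'.
  apply/andP; split; last by rewrite /= subrr.
  rewrite sorted_map; apply: sub_sorted sorted_rest => x y /=; by rewrite lerD2r.
have t'0 := canon_ge0 ct'.
have gn0 : (0 < gn)%N by rewrite -ltz_nat -g0E.
have Rt' : Rp t'.
  move=> x y xt yt xy.
  have hx : x + gn%:Z \in t.
    by rewrite Et /shiftg mem_cat; apply/orP; right; exact: (map_f (fun z => z + gn%:Z)).
  have hy : y + gn%:Z \in t.
    by rewrite Et /shiftg mem_cat; apply/orP; right; exact: (map_f (fun z => z + gn%:Z)).
  have hxy : x + gn%:Z < y + gn%:Z by rewrite ltrD2r.
  have := Rt _ _ hx hy hxy.
  by rewrite Et !G_shift // ltrD2r ltrD2r.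
have st' : size t' = (n - m)%N by rewrite size_map.
have gl : (gn < m + c0 t')%N.
  have z0 := canon_mem0 ct'.
  have := Rt 0 (0 + gn%:Z).
  rewrite Et G_shift // G_shift0 // (G_0 ct') add0r.
  have h1 : 0 \in shiftg m gn t' by rewrite -Et canon_mem0.
  have h2 : gn%:Z \in shiftg m gn t'.
    rewrite /shiftg mem_cat; apply/orP; right; apply/mapP; exists 0 => //; by rewrite add0r.
  have h3 : 0 < gn%:Z by rewrite ltz_nat.
  move/(_ h1 h2 h3).
  set st2 := @size int t'. lia.
apply/allpairsPdep; exists t', gn; split => //.
- apply: IH => //; lia.
- rewrite mem_iota; lia.
Qed.

Lemma shift_inj m g1 g2 t1 t2 : canon t1 -> canon t2 ->
  shiftg m g1 t1 = shiftg m g2 t2 -> g1 = g2 /\ t1 = t2.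
Proof.
move=> c1 c2 /eqP; rewrite /shiftg eqseq_cat // => /andP [_ /eqP E].
case: t1 c1 E => [|x1 t1] /andP [_ /eqP] // /= e1.
case: t2 c2 => [|x2 t2] /andP [_ /eqP] // /= e2.
rewrite e1 e2 !add0r => [[eg] Et].
have eg' : g1 = g2 by case: eg.
subst g2; split => //; congr (_ :: _); apply: (inj_map (@addIr _ g1%:Z)) Et.
Qed.

Lemma allpairs_uniq_nd (A B C : eqType) (f : A -> B -> C) (s : seq A)
  (t : A -> seq B) : uniq s -> (forall x, x \in s -> uniq (t x)) ->
  (forall x1 x2 y1 y2, x1 \in s -> x2 \in s -> y1 \in t x1 -> y2 \in t x2 ->
     f x1 y1 = f x2 y2 -> x1 = x2 /\ y1 = y2) ->
  uniq [seq f x y | x <- s, y <- t x].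
Proof.
elim: s => [//|a s IH] /= /andP [aS uS] ut finj.
rewrite cat_uniq; apply/and3P; split.
- rewrite map_inj_in_uniq; first by apply: ut; rewrite mem_head.
  move=> y1 y2 y1t y2t e; have [_ ->] := finj _ _ _ _ (mem_head a s) (mem_head a s) y1t y2t e.
  by [].
- apply/hasPn => z /allpairsPdep [x [y [xs yt ->]]]; apply/negP => /mapP [y' y't e].
  have xas : x \in a :: s by rewrite in_cons xs orbT.
  have [ex _] := finj _ _ _ _ xas (mem_head a s) yt y't e.
  by rewrite -ex xs in aS.
- apply: IH => //.
  + by move=> x xs; apply: ut; rewrite in_cons xs orbT.
  + move=> x1 x2 y1 y2 h1 h2; apply: finj; by rewrite in_cons ?h1 ?h2 orbT.
Qed.

Lemma Rg_uniq f n : uniq (Rg f n).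
Proof.
elim: f n => [//|f IH] n; rewrite Rg_S.
apply: allpairs_uniq_nd; first exact: iota_uniq.
- move=> m; rewrite mem_iota => /andP [m1 _].
  rewrite /Bg cat_uniq; apply/and3P; split.
  + by case: (m == n).
  + case: eqP => [->|_] /=; last by apply/hasPn.
    have -> : Rg f (n - n) = [::] by rewrite -(Rg_0 f); congr Rg; lia.
    by [].
  + apply: allpairs_uniq_nd; first exact: IH.
      by move=> *; exact: iota_uniq.
    move=> a1 a2 b1 b2 a1R a2R _ _.
    have [_ c1 _] := Rg_sound a1R; have [_ c2 _] := Rg_sound a2R.
    by case/(shift_inj c1 c2) => -> ->.
- move=> a1 a2 b1 b2; rewrite !mem_iota => /andP [h1 _] /andP [h2 _] b1B b2B e.
  subst b2; split => //.
  by rewrite -(Bg_c0 h1 b1B) -(Bg_c0 h2 b2B).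
Qed.

Section Counting.
Local Open Scope nat_scope.




Definition Rn n := Rg n n.
Definition Sc n := size (Rn n).
Definition Tc n := \sum_(t <- Rn n) c0 t.
Definition cv (w : nat -> nat) (Y : nat -> nat) n := \sum_(m <- iota 1 n) w m * Y (n - m).

Lemma sum_const_seq (T : Type) (s : seq T) k : \sum_(x <- s) k = k * size s.
Proof. by rewrite big_const_seq count_predT iter_addn_0. Qed.

Lemma cv_S w Y n : cv w Y n.+1 = w 1 * Y n + cv (fun m => w m.+1) Y n.
Proof.
rewrite /cv /= big_cons subn1 /=; congr (_ + _).
rewrite (iotaDl 1 1 n) big_map; apply: eq_bigr => m _.
by rewrite add1n subSS.
Qed.

Lemma sum_eqn (n : nat) (F : nat -> nat) : 0 < n ->
  \sum_(m <- iota 1 n) (m == n) * F m = F n.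
Proof.
move=> n0.
have nI : n \in iota 1 n by rewrite mem_iota; lia.
rewrite (bigD1_seq n nI (iota_uniq 1 n)) /= eqxx mul1n big1 ?addn0 //.
by move=> m /negbTE ->.
Qed.

Lemma Bg_size rec n m : 0 < m ->
  size (Bg rec n m) = (m == n) + (m.-1 * size (rec (n - m)) + \sum_(t <- rec (n - m)) c0 t).
Proof.
move=> m0; rewrite /Bg size_cat size_allpairs_dep; congr (_ + _).
  by case: (m == n).
rewrite sumnE big_map -sum_const_seq -big_split; apply: eq_bigr => t _.
rewrite size_iota /=; lia.
Qed.

Lemma Rn_unfold n : 0 < n ->
  Rn n = [seq x | m <- iota 1 n, x <- Bg Rn n m].
Proof.
case: n => [//|n] _; rewrite /Rn Rg_S.
congr flatten; apply/eq_in_map => m; rewrite mem_iota => /andP [m1 _].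
by rewrite /Bg (@Rg_fuel n (n.+1 - m)) //; lia.
Qed.

Lemma Sc_rec n : 0 < n -> Sc n = 1 + cv predn Sc n + cv (fun=> 1) Tc n.
Proof.
move=> n0; rewrite /Sc (Rn_unfold n0) size_allpairs_dep sumnE big_map.
rewrite (eq_big_seq (fun m => (m == n) * 1 + (m.-1 * Sc (n - m) + 1 * Tc (n - m)))).
  by rewrite big_split /= sum_eqn // big_split.
move=> m; rewrite mem_iota => /andP [m1 _]; rewrite Bg_size //.
by rewrite muln1 mul1n.
Qed.

Lemma Tc_rec n : 0 < n -> Tc n = n + cv (fun m => m * m.-1) Sc n + cv id Tc n.
Proof.
move=> n0; rewrite /Tc (Rn_unfold n0) big_allpairs_dep.
rewrite (eq_big_seq (fun m => (m == n) * m + (m * m.-1 * Sc (n - m) + m * Tc (n - m)))).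
  by rewrite big_split /= (sum_eqn id) // big_split addnA.
move=> m; rewrite mem_iota => /andP [m1 _].
rewrite (eq_big_seq (fun=> m)); last first.
  by move=> x xB; apply: Bg_c0 xB.
rewrite sum_const_seq Bg_size // /Sc /Tc; lia.
Qed.

Lemma cv_ext w1 w2 Y n : (forall m, 0 < m -> w1 m = w2 m) -> cv w1 Y n = cv w2 Y n.
Proof.
move=> h; apply: eq_big_seq => m; rewrite mem_iota => /andP [m1 _]; by rewrite h.
Qed.

Lemma cv_add w1 w2 Y n : cv (fun m => w1 m + w2 m) Y n = cv w1 Y n + cv w2 Y n.
Proof. by rewrite /cv -big_split; apply: eq_bigr => m _; rewrite mulnDl. Qed.

Lemma cv0 w Y : cv w Y 0 = 0.
Proof. by rewrite /cv big_nil. Qed.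

Lemma Sc0 : Sc 0 = 0. Proof. by []. Qed.
Lemma Tc0 : Tc 0 = 0. Proof. by rewrite /Tc /Rn /= big_nil. Qed.

Lemma rel_a n : cv predn Sc n + cv (fun=> 1) Sc n = cv id Sc n.
Proof. rewrite -cv_add; apply: cv_ext => m m0 /=; lia. Qed.

Lemma rel_b Y n : cv (fun=> 1) Y n.+1 = Y n + cv (fun=> 1) Y n.
Proof. by rewrite cv_S mul1n. Qed.

Lemma rel_c Y n : cv id Y n.+1 = Y n + cv id Y n + cv (fun=> 1) Y n.
Proof.
rewrite cv_S mul1n -addnA -cv_add; congr (_ + _); apply: cv_ext => m _ /=; lia.
Qed.

Lemma rel_d Y n : cv (fun m => m * m.-1) Y n.+1 = cv (fun m => m * m.-1) Y n + 2 * cv id Y n.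
Proof.
rewrite cv_S mul0n add0n.
have -> : 2 * cv id Y n = cv (fun m => m + m) Y n by rewrite cv_add; lia.
rewrite -cv_add; apply: cv_ext => m m0 /=; case: m m0 => [//|m] _ /=; nia.
Qed.

Theorem count_rec a : 0 < a ->
  (Sc a.+4)%:Z = (5 * (Sc a.+3)%:Z - 7 * (Sc a.+2)%:Z + 4 * (Sc a.+1)%:Z)%R.
Proof.
move=> a0.
have := rel_a a.
have := rel_a a.+1.
have := rel_a a.+2.
have := rel_a a.+3.
have := rel_a a.+4.
have := rel_b Sc a.
have := rel_b Sc a.+1.
have := rel_b Sc a.+2.
have := rel_b Sc a.+3.
have := rel_b Tc a.
have := rel_b Tc a.+1.
have := rel_b Tc a.+2.
have := rel_b Tc a.+3.
have := rel_c Sc a.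
have := rel_c Sc a.+1.
have := rel_c Sc a.+2.
have := rel_c Sc a.+3.
have := rel_c Tc a.
have := rel_c Tc a.+1.
have := rel_c Tc a.+2.
have := rel_c Tc a.+3.
have := rel_d Sc a.
have := rel_d Sc a.+1.
have := rel_d Sc a.+2.
have := rel_d Sc a.+3.
have := @Sc_rec a a0.
have := @Sc_rec a.+1 isT.
have := @Sc_rec a.+2 isT.
have := @Sc_rec a.+3 isT.
have := @Sc_rec a.+4 isT.
have := @Tc_rec a a0.
have := @Tc_rec a.+1 isT.
have := @Tc_rec a.+2 isT.
have := @Tc_rec a.+3 isT.
have := @Tc_rec a.+4 isT.
lia.
Qed.

Lemma init_vals : [/\ Sc 1 = 1, Sc 2 = 2, Sc 3 = 6 & Sc 4 = 19].
Proof.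
have := rel_a 0; have := rel_a 1; have := rel_a 2; have := rel_a 3; have := rel_a 4.
have := rel_b Sc 0; have := rel_b Sc 1; have := rel_b Sc 2; have := rel_b Sc 3.
have := rel_b Tc 0; have := rel_b Tc 1; have := rel_b Tc 2; have := rel_b Tc 3.
have := rel_c Sc 0; have := rel_c Sc 1; have := rel_c Sc 2; have := rel_c Sc 3.
have := rel_c Tc 0; have := rel_c Tc 1; have := rel_c Tc 2; have := rel_c Tc 3.
have := rel_d Sc 0; have := rel_d Sc 1; have := rel_d Sc 2; have := rel_d Sc 3.
have := @Sc_rec 1 isT; have := @Sc_rec 2 isT; have := @Sc_rec 3 isT; have := @Sc_rec 4 isT.
have := @Tc_rec 1 isT; have := @Tc_rec 2 isT; have := @Tc_rec 3 isT; have := @Tc_rec 4 isT.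
have := cv0 predn Sc; have := cv0 (fun=> 1) Sc; have := cv0 id Sc;
have := cv0 (fun m => m * m.-1) Sc; have := cv0 (fun=> 1) Tc; have := cv0 id Tc.
have := Sc0; have := Tc0.
move=> *; split; lia.
Qed.

End Counting.
Local Open Scope ring_scope.


Lemma G_perm s t x : perm_eq s t -> G s x = G t x.
Proof. by move/permP => h; rewrite /G !h. Qed.

Lemma Rp_perm s t : perm_eq s t -> Rp s -> Rp t.
Proof.
move=> pst R x y xt yt xy; rewrite -!(G_perm _ pst).
by apply: R => //; rewrite (perm_mem pst).
Qed.

Lemma G_shiftc s c x : G (map (fun y => y + c) s) (x + c) = G s x + c.
Proof.
rewrite /G !count_map.
have -> : count (preim (fun y => y + c) (fun y => x + c < y)) s = count (fun y => x < y) s.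
  by apply: eq_count => y /=; rewrite ltrD2r.
have -> : count (preim (fun y => y + c) (fun y => y < x + c)) s = count (fun y => y < x) s.
  by apply: eq_count => y /=; rewrite ltrD2r.
ring.
Qed.

Lemma Rp_shift s c : Rp s -> Rp (map (fun y => y + c) s).
Proof.
move=> R x' y' /mapP [x xs ->] /mapP [y ys ->]; rewrite ltrD2r => xy.
by rewrite !G_shiftc ltrD2r; apply: R.
Qed.

Lemma classes n : (1 <= n)%N -> pd_num_classes n (Sc n).
Proof.
move=> n1; exists (Rn n); split => //.
- move=> r /Rg_sound [sr _ Rr]; split => //; exact: Rp_period.
- move=> i j il jl ij [c pc].
  have ri : nth [::] (Rn n) i \in Rn n by apply: mem_nth.
  have rj : nth [::] (Rn n) j \in Rn n by apply: mem_nth.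
  have [_ ci _] := Rg_sound ri; have [_ cj _] := Rg_sound rj.
  move: ci cj pc.
  set u := nth [::] (Rn n) i; set v := nth [::] (Rn n) j => ci cj pc.
  have su : sorted <=%R (map (fun x => x + c) u).
    rewrite sorted_map; apply: sub_sorted (proj1 (andP ci)) => x y /=.
    by rewrite lerD2r.
  have E := sorted_eq le_trans le_anti (proj1 (andP cj)) su pc.
  have c0 : c = 0.
    move: ci cj; rewrite E; case: u {E su pc} => [|x u] /andP [_ /eqP] //= -> /andP [_ /eqP].
    by rewrite add0r.
  have uv : u = v by rewrite E c0; rewrite map_id_in // => x _; rewrite addr0.
  apply: ij; apply/eqP; rewrite -(nth_uniq [::] il jl (Rg_uniq n n)).
  by apply/eqP.
- move=> s ss ps.
  have Rs := period_Rp ps.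
  set u := sort <=%R s.
  have pu : perm_eq u s by rewrite perm_sort.
  have su : size u = n by rewrite size_sort.
  case Eu : u => [|mu u'] in pu su.
    by move: su => /= su; lia.
  set r := map (fun y => y + - mu) (mu :: u').
  exists r.
    apply: Rg_complete => //.
    + by rewrite size_map.
    + apply/andP; split; last by rewrite /= subrr.
      rewrite sorted_map; apply: sub_sorted (_ : sorted <=%R (mu :: u')).
        by move=> x y /=; rewrite lerD2r.
      by rewrite -Eu sort_sorted //; exact: le_total.
    + apply: Rp_shift; apply: Rp_perm (Rs); by rewrite perm_sym.
  exists (- mu); rewrite /r; apply: perm_map; exact: pu.
Qed.

Theorem corollary4p3 :
  exists a : nat -> nat,
    (forall n : nat, (1 <= n)%N -> pd_num_classes n (a n)) /\
    a 1%N = 1%N /\ a 2%N = 2%N /\ a 3%N = 6%N /\ a 4%N = 19%N /\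
    (forall n : nat, (5 <= n)%N ->
       (a n)%:Z = 5 * (a (n - 1)%N)%:Z - 7 * (a (n - 2)%N)%:Z + 4 * (a (n - 3)%N)%:Z).
Proof.
exists Sc; have [h1 h2 h3 h4] := init_vals.
split; first exact: classes.
do 4 (split; first done).
move=> n n5.
have [a Ea] : exists a, n = a.+4 by exists (n - 4)%N; lia.
subst n.
have -> : (a.+4 - 1 = a.+3)%N by lia.
have -> : (a.+4 - 2 = a.+2)%N by lia.
have -> : (a.+4 - 3 = a.+1)%N by lia.
apply: count_rec; lia.
Qed.
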